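(* Let $c\in\mathcal C^1([0,1])$ with $c>0$, $\alpha>0$, and let $(\bar u,\bar v)$ be a $\mathcal C^1$ stationary solution of system (S) satisfying either (PBC) with $\bar u,\bar v>0$ on $[0,1]$, or (DBC) with $m\le\bar u(x)/x\le M$ and $m\le\bar v(x)/(1-x)\le M$ for $x\in(0,1)$ and constants $0<m\le M$. Let $(u,v)$ be a classical ($\mathcal C^1$) nonnegative solution of system (S) with the same boundary conditions, such that in case (DBC) $u(x,t)\le Kx$ and $v(x,t)\le K(1-x)$ for some constant $K$. Then $$\frac{d}{dt}\mathcal H[u,v]=-\frac{\alpha}{2}\int_0^1\frac{c\,J(u,v,\bar u,\bar v)}{(1+u+v)(1+\bar u+\bar v)}\,dx.$$
   Context: System (S): $\partial_t u+\partial_x(c(x)u)=\frac{\alpha v}{1+u+v}-u$, $\partial_t v-\partial_x(c(x)v)=\frac{\alpha u}{1+u+v}-v$ on $x\in[0,1]$; (DBC): $u(0,t)=0$, $v(1,t)=0$; (PBC): $u(0,t)=u(1,t)$, $v(0,t)=v(1,t)$, $c$ periodic. Lyapunov functional: $\mathcal H[u,v]=\frac12\int_0^1c\Big(\frac{\bar v}{\bar u}(u-\bar u)^2+\frac{\bar u}{\bar v}(v-\bar v)^2\Big)dx$ (for (DBC) the integrand is extended continuously by $0$ at $x=0,1$). $J(u,v,\bar u,\bar v)=\hat u^2[(1+u+v)(\bar u^2+\bar v^2)+2\bar v^2\bar u]+\hat v^2[(1+u+v)(\bar u^2+\bar v^2)+2\bar u^2\bar v]-2\hat u\hat v(\bar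 u^2+\bar v^2+\bar u^2\bar v+\bar u\bar v^2)$ with $\hat u=(u-\bar u)/\bar u$, $\hat v=(v-\bar v)/\bar v$. *)

(* Defs.v *)
From Stdlib Require Import Reals Lra.
Open Scope R_scope.

Definition I01 (x : R) : Prop := 0 <= x <= 1.

Definition has_deriv01 (f f' : R -> R) : Prop :=
  forall x, I01 x ->
    limit1_in (fun y => (f y - f x) / (y - x)) (fun y => I01 y /\ y <> x) (f' x) x.

Definition cont01 (f : R -> R) : Prop :=
  forall x, I01 x -> limit1_in f I01 (f x) x.

Definition C1_01 (f : R -> R) : Prop :=
  exists f', has_deriv01 f f' /\ cont01 f'.

Definition Dom (T x t : R) : Prop := I01 x /\ 0 < t < T.

Definition cont2 (T : R) (f : R -> R -> R) : Prop :=
  forall x t, Dom T x t -> forall eps, eps > 0 -> exists delta, delta > 0 /\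
    forall y s, Dom T y s -> Rabs (y - x) < delta -> Rabs (s - t) < delta ->
      Rabs (f y s - f x t) < eps.

Definition pdx (T : R) (f fx : R -> R -> R) : Prop :=
  forall t, 0 < t < T -> has_deriv01 (fun x => f x t) (fun x => fx x t).

Definition pdt (T : R) (f ft : R -> R -> R) : Prop :=
  forall x t, Dom T x t -> derivable_pt_lim (fun s => f x s) t (ft x t).

Definition C1_2 (T : R) (f : R -> R -> R) : Prop :=
  exists fx ft, pdx T f fx /\ pdt T f ft /\ cont2 T f /\ cont2 T fx /\ cont2 T ft.

Definition is_RInt (f : R -> R) (a b I : R) : Prop :=
  exists pr : Riemann_integrable f a b, RiemannInt pr = I.

Inductive BC := PBC | DBC.

(* integrand of the Lyapunov functional (without the factor 1/2).
   In case (DBC), at x = 0 and x = 1 this evaluates to 0 with Rocq's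
   convention x / 0 = 0 (since there u - ub = 0 resp. v - vb = 0 and ub = 0
   resp. vb = 0), i.e. it is the continuous extension by 0. *)
Definition Hdens (cx ub vb u v : R) : R :=
  cx * (vb / ub * (u - ub) ^ 2 + ub / vb * (v - vb) ^ 2).

Definition Jfun (u v ub vb : R) : R :=
  let uh := (u - ub) / ub in
  let vh := (v - vb) / vb in
  uh ^ 2 * ((1 + u + v) * (ub ^ 2 + vb ^ 2) + 2 * vb ^ 2 * ub)
  + vh ^ 2 * ((1 + u + v) * (ub ^ 2 + vb ^ 2) + 2 * ub ^ 2 * vb)
  - 2 * uh * vh * (ub ^ 2 + vb ^ 2 + ub ^ 2 * vb + ub * vb ^ 2).

Definition stationary (alpha : R) (c ub vb : R -> R) : Prop :=
  C1_01 ub /\ C1_01 vb /\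
  has_deriv01 (fun x => c x * ub x)
    (fun x => alpha * vb x / (1 + ub x + vb x) - ub x) /\
  has_deriv01 (fun x => c x * vb x)
    (fun x => - (alpha * ub x / (1 + ub x + vb x) - vb x)).

Definition solution (T alpha : R) (c : R -> R) (u v : R -> R -> R) : Prop :=
  C1_2 T u /\ C1_2 T v /\
  exists ut vt Fu Fv,
    pdt T u ut /\ pdt T v vt /\
    pdx T (fun x t => c x * u x t) Fu /\
    pdx T (fun x t => c x * v x t) Fv /\
    forall x t, Dom T x t ->
      ut x t + Fu x t = alpha * v x t / (1 + u x t + v x t) - u x t /\
      vt x t - Fv x t = alpha * u x t / (1 + u x t + v x t) - v x t.

Definition bc_hyp (bc : BC) (T : R) (c ub vb : R -> R) (u v : R -> R -> R) : Prop :=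
  match bc with
  | PBC =>
      c 0 = c 1 /\ ub 0 = ub 1 /\ vb 0 = vb 1 /\
      (forall x, I01 x -> ub x > 0 /\ vb x > 0) /\
      (forall t, 0 < t < T -> u 0 t = u 1 t /\ v 0 t = v 1 t)
  | DBC =>
      ub 0 = 0 /\ vb 1 = 0 /\
      (exists m M, 0 < m /\ m <= M /\
         forall x, 0 < x < 1 ->
           m <= ub x / x <= M /\ m <= vb x / (1 - x) <= M) /\
      (forall t, 0 < t < T -> u 0 t = 0 /\ v 1 t = 0) /\
      (exists K, forall x t, Dom T x t -> u x t <= K * x /\ v x t <= K * (1 - x))
  end.

(* Main.v *)
Require Import Defs.
From Stdlib Require Import Reals Lra.
From Coquelicot Require Coquelicot.
Open Scope R_scope.

Module Aux.
Import Coquelicot.Coquelicot.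

Definition cl01 (x : R) : R := Rmax 0 (Rmin 1 x).
Definition clab (a b s : R) : R := Rmax a (Rmin b s).

Lemma cl01_I01 x : I01 (cl01 x).
Proof. unfold I01, cl01, Rmax, Rmin; repeat destruct Rle_dec; lra. Qed.

Lemma cl01_id x : I01 x -> cl01 x = x.
Proof. unfold I01, cl01, Rmax, Rmin; intros; repeat destruct Rle_dec; lra. Qed.

Lemma cl01_lip x y : Rabs (cl01 y - cl01 x) <= Rabs (y - x).
Proof. unfold cl01, Rmax, Rmin; repeat destruct Rle_dec; unfold Rabs; repeat destruct Rcase_abs; lra. Qed.

Lemma clab_in a b s : a <= b -> a <= clab a b s <= b.
Proof. unfold clab, Rmax, Rmin; intros; repeat destruct Rle_dec; lra. Qed.

Lemma clab_id a b s : a <= s <= b -> clab a b s = s.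
Proof. unfold clab, Rmax, Rmin; intros; repeat destruct Rle_dec; lra. Qed.

Lemma clab_lip a b x y : Rabs (clab a b y - clab a b x) <= Rabs (y - x).
Proof. unfold clab, Rmax, Rmin; repeat destruct Rle_dec; unfold Rabs; repeat destruct Rcase_abs; lra. Qed.

Definition rc (f : R -> R) (x : R) := limit1_in f I01 (f x) x.

Lemma rc_clamp f : (forall x, I01 x -> rc f x) -> forall x, continuity_pt (fun y => f (cl01 y)) x.
Proof.
  intros Hf x eps Heps.
  destruct (Hf (cl01 x) (cl01_I01 x) eps Heps) as [alp [Halp H]].
  exists alp; split; auto.
  intros y [_ Hd]; simpl in *; unfold R_dist in *.
  apply H; split; [apply cl01_I01|]. simpl; unfold R_dist.
  eapply Rle_lt_trans; [apply cl01_lip|]; auto.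
Qed.

Lemma deriv_rc f f' : has_deriv01 f f' -> forall x, I01 x -> rc f x.
Proof.
  intros Hd x Hx eps Heps.
  destruct (Hd x Hx 1 Rlt_0_1) as [alp [Halp H]].
  set (K := Rabs (f' x) + 1).
  assert (HK : 0 < K) by (unfold K; pose proof (Rabs_pos (f' x)); lra).
  exists (Rmin alp (eps / K)); split.
  { apply Rmin_pos; auto. apply Rdiv_lt_0_compat; auto. }
  intros y [Hy Hdy]; simpl in *; unfold R_dist in *.
  destruct (Req_dec y x) as [->|Hne].
  { rewrite Rminus_diag, Rabs_R0; auto. }
  assert (Hb : Rabs ((f y - f x) / (y - x) - f' x) < 1).
  { apply H; split; [split; auto|]. simpl; unfold R_dist.
    eapply Rlt_le_trans; [apply Hdy| apply Rmin_l]. }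
  assert (Hyx : y - x <> 0) by lra.
  assert (E : f y - f x = ((f y - f x) / (y - x) - f' x + f' x) * (y - x)) by (field; auto).
  rewrite E, Rabs_mult.
  assert (Hq : Rabs ((f y - f x) / (y - x) - f' x + f' x) <= K).
  { unfold K. eapply Rle_trans; [apply Rabs_triang|]. lra. }
  assert (Hr : Rabs (y - x) < eps / K) by (eapply Rlt_le_trans; [apply Hdy|apply Rmin_r]).
  apply Rle_lt_trans with (K * Rabs (y - x)).
  { apply Rmult_le_compat_r; auto. apply Rabs_pos. }
  apply Rlt_le_trans with (K * (eps / K)).
  { apply Rmult_lt_compat_l; auto. }
  right; field; lra.
Qed.

Lemma deriv_interior f f' x : has_deriv01 f f' -> 0 < x < 1 -> is_derive f x (f' x).
Proof.
  intros Hd Hx. apply is_derive_Reals.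
  intros eps Heps.
  destruct (Hd x (conj (Rlt_le _ _ (proj1 Hx)) (Rlt_le _ _ (proj2 Hx))) eps Heps) as [alp [Halp H]].
  assert (Hp : 0 < Rmin alp (Rmin x (1 - x))) by (repeat apply Rmin_pos; lra).
  exists (mkposreal _ Hp). intros h Hh Hlt; simpl in Hlt.
  assert (H1 := Rmin_l alp (Rmin x (1 - x))).
  assert (H2 := Rmin_l x (1 - x)). assert (H3 := Rmin_r x (1 - x)).
  assert (H4 := Rmin_r alp (Rmin x (1 - x))).
  assert (Hh' : Rabs h < x /\ Rabs h < 1 - x /\ Rabs h < alp) by lra.
  destruct Hh' as [Ha [Hb Hc]].
  assert (Hy : I01 (x + h)).
  { unfold I01. unfold Rabs in *; destruct Rcase_abs; lra. }
  specialize (H (x + h)). simpl in H; unfold R_dist in H.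
  replace (x + h - x) with h in H by ring.
  apply H. split; [split; auto; lra|]. auto.
Qed.


Definition hat2 (a b : R) (f : R -> R -> R) : R -> R -> R := fun s x => f (cl01 x) (clab a b s).

Lemma cont2_hat T f a b : cont2 T f -> 0 < a -> a <= b -> b < T ->
  forall s x, continuity_2d_pt (hat2 a b f) s x.
Proof.
  intros Hf Ha Hab Hb s x eps.
  assert (HD : Dom T (cl01 x) (clab a b s)).
  { split; [apply cl01_I01|]. pose proof (clab_in a b s Hab); lra. }
  destruct (Hf _ _ HD eps (cond_pos eps)) as [d [Hd H]].
  exists (mkposreal d Hd). intros s' x' H1 H2; simpl in *.
  unfold hat2. apply H.
  - split; [apply cl01_I01|]. pose proof (clab_in a b s' Hab); lra.
  - eapply Rle_lt_trans; [apply cl01_lip|]; auto.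
  - eapply Rle_lt_trans; [apply clab_lip|]; auto.
Qed.

Lemma rc_hat f : (forall x, I01 x -> rc f x) -> forall s x,
  continuity_2d_pt (fun _ x => f (cl01 x)) s x.
Proof.
  intros Hf s x.
  apply (continuity_1d_2d_pt_comp (fun y => f (cl01 y)) (fun _ y => y)).
  - apply rc_clamp; auto.
  - apply continuity_2d_pt_id2.
Qed.

Lemma c2_restrict F s x : continuity_2d_pt F s x -> continuity_pt (fun y => F s y) x.
Proof.
  intros H eps Heps.
  destruct (H (mkposreal eps Heps)) as [d Hd].
  exists d; split; [apply cond_pos|].
  intros y [_ Hy]; simpl in *; unfold R_dist in *.
  apply Hd; auto. rewrite Rminus_diag, Rabs_R0; apply cond_pos.
Qed.

Lemma c2_zero_bounded g k s x : continuity_2d_pt k s x -> k s x = 0 ->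
  (exists B, locally_2d (fun s' x' => Rabs (g s' x') <= B) s x) ->
  continuity_2d_pt (fun s' x' => g s' x' * k s' x') s x.
Proof.
  intros Hk Hk0 [B [d HB]] eps.
  set (B' := Rabs B + 1).
  assert (HB' : 0 < B') by (unfold B'; pose proof (Rabs_pos B); lra).
  assert (He : 0 < eps / B') by (apply Rdiv_lt_0_compat; [apply cond_pos|auto]).
  destruct (Hk (mkposreal _ He)) as [d' Hd'].
  assert (Hm : 0 < Rmin d d') by (apply Rmin_pos; apply cond_pos).
  exists (mkposreal _ Hm). intros s' x' H1 H2; simpl in *.
  rewrite Hk0, Rmult_0_r, Rminus_0_r, Rabs_mult.
  assert (Hg : Rabs (g s' x') <= B).
  { apply HB; eapply Rlt_le_trans; eauto; apply Rmin_l. }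
  assert (Hkk : Rabs (k s' x') < eps / B').
  { specialize (Hd' s' x'). rewrite Hk0, Rminus_0_r in Hd'. apply Hd';
    eapply Rlt_le_trans; eauto; apply Rmin_r. }
  apply Rle_lt_trans with (B' * Rabs (k s' x')).
  { apply Rmult_le_compat_r; [apply Rabs_pos|]. unfold B'. pose proof (Rle_abs B); lra. }
  apply Rlt_le_trans with (B' * (eps / B')).
  { apply Rmult_lt_compat_l; auto. }
  right; field; lra.
Qed.


Lemma closure_ge g p m : I01 p -> rc g p -> (forall y, 0 < y < 1 -> m <= g y) -> m <= g p.
Proof.
  intros Hp Hg Hm. destruct (Rle_dec m (g p)) as [|Hn]; auto.
  exfalso. apply Rnot_le_lt in Hn.
  destruct (Hg (m - g p)) as [alp [Halp H]]; [lra|].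
  set (d := Rmin alp (1/2) / 2).
  assert (Hd0 : 0 < d) by (unfold d; apply Rdiv_lt_0_compat; [apply Rmin_pos|]; lra).
  assert (Hd1 : d < alp /\ d <= 1/4).
  { unfold d; pose proof (Rmin_l alp (1/2)); pose proof (Rmin_r alp (1/2)); lra. }
  unfold I01 in Hp.
  set (y := if Rle_dec p (1/2) then p + d else p - d).
  assert (Hy : 0 < y < 1 /\ Rabs (y - p) < alp).
  { unfold y; destruct Rle_dec.
    - replace (p + d - p) with d by ring. rewrite Rabs_right; lra.
    - replace (p - d - p) with (- d) by ring. rewrite Rabs_Ropp, Rabs_right; lra. }
  destruct Hy as [Hy1 Hy2].
  assert (Hgy := Hm y Hy1).
  specialize (H y). simpl in H; unfold R_dist in H.
  assert (Rabs (g y - g p) < m - g p) by (apply H; split; [unfold I01; lra|auto]).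
  apply Rabs_def2 in H0; lra.
Qed.

Definition gext (g : R -> R) (p d : R) (y : R) : R :=
  if Req_EM_T y p then d else g y / (y - p).

Lemma gext_rc g p d : I01 p -> g p = 0 ->
  limit1_in (fun y => (g y - g p) / (y - p)) (fun y => I01 y /\ y <> p) d p ->
  (forall x, I01 x -> rc g x) -> forall x, I01 x -> rc (gext g p d) x.
Proof.
  intros Hp Hg0 Hd Hg x Hx.
  destruct (Req_dec x p) as [->|Hne].
  - intros eps Heps. destruct (Hd eps Heps) as [alp [Halp H]].
    exists alp; split; auto. intros y [Hy Hdy]; simpl in *; unfold R_dist in *.
    unfold gext. destruct (Req_EM_T p p) as [_|]; [|congruence].
    destruct (Req_EM_T y p) as [->|Hyp].
    + rewrite Rminus_diag, Rabs_R0; auto.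
    + specialize (H y). simpl in H; unfold R_dist in H.
      rewrite Hg0, Rminus_0_r in H. apply H; auto.
  - assert (L : limit1_in (fun y => g y * / (y - p)) I01 (g x * / (x - p)) x).
    { apply limit_mul; [apply Hg; auto|]. apply limit_inv; [|lra].
      apply limit_minus; [apply lim_x| ]. intros e He; exists 1; split; [lra|]; intros; simpl; unfold R_dist; rewrite Rminus_diag, Rabs_R0; auto. }
    intros eps Heps. destruct (L eps Heps) as [alp [Halp H]].
    assert (Hm : 0 < Rmin alp (Rabs (x - p))).
    { apply Rmin_pos; auto. apply Rabs_pos_lt; lra. }
    exists (Rmin alp (Rabs (x - p))); split; auto.
    intros y [Hy Hdy]; simpl in *; unfold R_dist in *.
    unfold gext. destruct (Req_EM_T x p); [congruence|].
    destruct (Req_EM_T y p) as [->|].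
    + exfalso. assert (Rabs (p - x) < Rabs (x - p)) by (eapply Rlt_le_trans; [apply Hdy|apply Rmin_r]).
      rewrite <- Rabs_Ropp in H0. replace (- (p - x)) with (x - p) in H0 by ring. lra.
    + apply H; split; auto. eapply Rlt_le_trans; [apply Hdy|apply Rmin_l].
Qed.

Lemma gext_eq g p d y : y <> p -> gext g p d y = g y / (y - p).
Proof. intros; unfold gext; destruct Req_EM_T; [congruence|auto]. Qed.

Lemma gext_p g p d : gext g p d p = d.
Proof. unfold gext; destruct Req_EM_T; [auto|congruence]. Qed.


Lemma rc_plus f g x : rc f x -> rc g x -> rc (fun y => f y + g y) x.
Proof. intros; apply limit_plus; auto. Qed.
Lemma rc_minus f g x : rc f x -> rc g x -> rc (fun y => f y - g y) x.
Proof. intros; apply limit_minus; auto. Qed.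
Lemma rc_mult f g x : rc f x -> rc g x -> rc (fun y => f y * g y) x.
Proof. intros; apply limit_mul; auto. Qed.
Lemma rc_inv f x : rc f x -> f x <> 0 -> rc (fun y => / f y) x.
Proof. intros; apply limit_inv; auto. Qed.
Lemma rc_div f g x : rc f x -> rc g x -> g x <> 0 -> rc (fun y => f y / g y) x.
Proof. intros; apply limit_mul; auto; apply limit_inv; auto. Qed.
Lemma rc_const k x : rc (fun _ => k) x.
Proof. intros e He; exists 1; split; [lra|]; intros; simpl; unfold R_dist; rewrite Rminus_diag, Rabs_R0; auto. Qed.
Lemma rc_pow f n x : rc f x -> rc (fun y => f y ^ n) x.
Proof.
  intros H; induction n; simpl. apply rc_const. apply rc_mult; auto.
Qed.

Lemma cpt_rc f y : I01 y -> continuity_pt (fun x => f (cl01 x)) y -> rc f y.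
Proof.
  intros Hy H eps He. destruct (H eps He) as [d [Hd H']].
  exists d; split; auto. intros z [Hz Hzd].
  destruct (Req_dec z y) as [->|Hne].
  { simpl; unfold R_dist; rewrite Rminus_diag, Rabs_R0; auto. }
  specialize (H' z). rewrite !cl01_id in H' by auto. apply H'. split; auto. split; auto. exact I.
Qed.

Definition JJ (uh vh u v ub vb : R) : R :=
  uh ^ 2 * ((1 + u + v) * (ub ^ 2 + vb ^ 2) + 2 * vb ^ 2 * ub)
  + vh ^ 2 * ((1 + u + v) * (ub ^ 2 + vb ^ 2) + 2 * ub ^ 2 * vb)
  - 2 * uh * vh * (ub ^ 2 + vb ^ 2 + ub ^ 2 * vb + ub * vb ^ 2).

Lemma RInt_lin (f g : R -> R) a b k1 k2 : ex_RInt f a b -> ex_RInt g a b ->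
  RInt (fun x => k1 * f x - k2 * g x) a b = k1 * RInt f a b - k2 * RInt g a b.
Proof.
  intros Hf Hg. apply is_RInt_unique.
  assert (H := is_RInt_minus _ _ a b _ _ (is_RInt_scal _ a b k1 _ (RInt_correct _ _ _ Hf))
                  (is_RInt_scal _ a b k2 _ (RInt_correct _ _ _ Hg))).
  exact H.
Qed.

Section Main.
Variables (bc : BC) (alpha T : R) (c ub vb : R -> R) (u v : R -> R -> R).
Variables (dc dub dvb : R -> R) (ux vx ut vt Fu Fv : R -> R -> R).
Hypothesis Halpha : alpha > 0.
Hypothesis HT : T > 0.
Hypothesis Hdc : has_deriv01 c dc.
Hypothesis Hcpos : forall x, I01 x -> c x > 0.
Hypothesis Hdub : has_deriv01 ub dub.
Hypothesis Hdvb : has_deriv01 vb dvb.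
Hypothesis Hsu : has_deriv01 (fun x => c x * ub x)
    (fun x => alpha * vb x / (1 + ub x + vb x) - ub x).
Hypothesis Hsv : has_deriv01 (fun x => c x * vb x)
    (fun x => - (alpha * ub x / (1 + ub x + vb x) - vb x)).
Hypothesis Hux : pdx T u ux.
Hypothesis Hvx : pdx T v vx.
Hypothesis Hut : pdt T u ut.
Hypothesis Hvt : pdt T v vt.
Hypothesis Hcu : cont2 T u.
Hypothesis Hcv : cont2 T v.
Hypothesis Hcut : cont2 T ut.
Hypothesis Hcvt : cont2 T vt.
Hypothesis HFu : pdx T (fun x t => c x * u x t) Fu.
Hypothesis HFv : pdx T (fun x t => c x * v x t) Fv.
Hypothesis Heq : forall x t, Dom T x t ->
      ut x t + Fu x t = alpha * v x t / (1 + u x t + v x t) - u x t /\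
      vt x t - Fv x t = alpha * u x t / (1 + u x t + v x t) - v x t.
Hypothesis Hnonneg : forall x t, Dom T x t -> 0 <= u x t /\ 0 <= v x t.
Hypothesis Hbc : bc_hyp bc T c ub vb u v.

Definition ubh := gext ub 0 (dub 0).
Definition vbh := gext vb 1 (dvb 1).

Lemma rc_ub x : I01 x -> rc ub x. Proof. apply deriv_rc with dub; auto. Qed.
Lemma rc_vb x : I01 x -> rc vb x. Proof. apply deriv_rc with dvb; auto. Qed.
Lemma rc_c x : I01 x -> rc c x. Proof. apply deriv_rc with dc; auto. Qed.

Lemma I01_0 : I01 0. Proof. unfold I01; lra. Qed.
Lemma I01_1 : I01 1. Proof. unfold I01; lra. Qed.

Lemma dbc_facts : bc = DBC -> exists m, 0 < m /\
  (forall x, I01 x -> m <= ubh x /\ m <= - vbh x).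
Proof.
  intros E. pose proof Hbc as HB; rewrite E in HB; simpl in HB.
  destruct HB as [Hu0 [Hv1 [[m [M [Hm [HmM Hb]]]] _]]].
  exists m; split; auto. intros x Hx.
  assert (R1 : forall y, I01 y -> rc ubh y).
  { apply gext_rc; auto using I01_0, rc_ub; try apply Hdub, I01_0. }
  assert (R2 : forall y, I01 y -> rc vbh y).
  { apply gext_rc; auto using I01_1, rc_vb; try apply Hdvb, I01_1. }
  split.
  - apply closure_ge; auto. intros y Hy. unfold ubh; rewrite gext_eq by lra.
    rewrite Rminus_0_r. apply Hb; auto.
  - apply (closure_ge (fun y => - vbh y)); auto.
    + unfold rc. apply limit_Ropp. apply R2; auto.
    + intros y Hy. unfold vbh; rewrite gext_eq by lra.
      replace (- (vb y / (y - 1))) with (vb y / (1 - y)) by (field; lra). apply Hb; auto.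
Qed.

Lemma ub_pos x : I01 x -> (0 < x -> 0 < ub x) /\ (x < 1 -> 0 < vb x).
Proof.
  intros Hx. assert (E : bc = PBC \/ bc = DBC) by (destruct bc; auto).
  destruct E as [E|E].
  - pose proof Hbc as HB; rewrite E in HB; simpl in HB. destruct HB as [_ [_ [_ [H _]]]].
    destruct (H x Hx); split; intros; lra.
  - destruct (dbc_facts E) as [m [Hm H]]. destruct (H x Hx) as [H1 H2].
    unfold ubh, vbh in *. unfold I01 in Hx. split; intros.
    + rewrite gext_eq in H1 by lra. rewrite Rminus_0_r in H1.
      assert (0 < ub x / x) by lra.
      replace (ub x) with (ub x / x * x) by (field; lra). apply Rmult_lt_0_compat; lra.
    + rewrite gext_eq in H2 by lra.
      assert (0 < vb x / (1 - x)).
      { replace (vb x / (1 - x)) with (- (vb x / (x - 1))) by (field; lra). lra. }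
      replace (vb x) with (vb x / (1 - x) * (1 - x)) by (field; lra). apply Rmult_lt_0_compat; lra.
Qed.

Lemma ub_pos_all x : I01 x -> (bc = PBC -> 0 < ub x /\ 0 < vb x).
Proof.
  intros Hx E. pose proof Hbc as HB; rewrite E in HB; simpl in HB. destruct HB as [_ [_ [_ [H _]]]].
  destruct (H x Hx); split; lra.
Qed.


Definition uh x s := (u x s - ub x) / ub x.
Definition vh x s := (v x s - vb x) / vb x.
Definition Aof (k : R -> R -> R) x s := vb x * uh x s * k x s.
Definition Bof (k : R -> R -> R) x s := ub x * vh x s * k x s.

Lemma ratio_bound (w z m y K : R) : 0 < m -> 0 < y -> 0 <= w -> w <= K * y -> m <= z / y ->
  Rabs ((w - z) / z) <= Rabs K / m + 1.
Proof.
  intros Hm Hy Hw HwK Hz.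
  assert (Hz' : m * y <= z).
  { replace z with (z / y * y) by (field; lra). apply Rmult_le_compat_r; lra. }
  assert (Hzp : 0 < z) by nra.
  assert (HK : w <= Rabs K * y) by (pose proof (Rle_abs K); nra).
  unfold Rdiv. rewrite Rabs_mult, (Rabs_inv z), (Rabs_right z) by lra.
  assert (H1 : Rabs (w - z) <= w + z) by (unfold Rabs; destruct Rcase_abs; lra).
  assert (H2 : w * / z <= Rabs K / m).
  { apply Rmult_le_reg_r with (z * m). nra.
    replace (w * / z * (z * m)) with (w * m) by (field; lra).
    replace (Rabs K / m * (z * m)) with (Rabs K * z) by (field; lra).
    pose proof (Rabs_pos K). nra. }
  apply Rle_trans with ((w + z) * / z).
  { apply Rmult_le_compat_r; auto. left; apply Rinv_0_lt_compat; lra. }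
  replace ((w + z) * / z) with (w * / z + 1) by (field; lra). lra.
Qed.

Lemma dbc_bounds : bc = DBC -> exists B, forall y s, Dom T y s ->
  (y < 1 -> Rabs (uh y s) <= B) /\ (0 < y -> Rabs (vh y s) <= B).
Proof.
  intros E. pose proof Hbc as HB; rewrite E in HB; simpl in HB.
  destruct HB as [Hu0 [Hv1 [[m [M [Hm [HmM Hb]]]] [Hz [K HK]]]]].
  exists (Rabs K / m + 1). intros y s HD.
  pose proof (Rabs_pos K) as HKp.
  assert (HB0 : 0 <= Rabs K / m) by (apply Rdiv_le_0_compat; lra).
  destruct (HK y s HD) as [HK1 HK2]. destruct (Hnonneg y s HD) as [Hn1 Hn2].
  destruct HD as [Hy Hs]. unfold I01 in Hy.
  split; intros Hy'.
  - destruct (Req_dec y 0) as [->|Hy0].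
    + unfold uh. rewrite Hu0, Rdiv_0_r, Rabs_R0. lra.
    + apply ratio_bound with y; try lra. apply Hb; lra.
  - destruct (Req_dec y 1) as [->|Hy0].
    + unfold vh. rewrite Hv1, Rdiv_0_r, Rabs_R0. lra.
    + apply ratio_bound with (1 - y); try lra. apply Hb; lra.
Qed.

Lemma local_bound f : (forall x, I01 x -> rc f x) -> forall x, exists d, 0 < d /\
  forall x', Rabs (x' - x) < d -> Rabs (f (cl01 x')) <= Rabs (f (cl01 x)) + 1.
Proof.
  intros Hf x. destruct (rc_clamp f Hf x 1 Rlt_0_1) as [d [Hd H]].
  exists d; split; auto. intros x' Hx'.
  destruct (Req_dec x x') as [<-|Hne]; [lra|].
  assert (Rabs (f (cl01 x') - f (cl01 x)) < 1).
  { apply (H x'). split; [split; [exact I|auto]|auto]. }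
  pose proof (Rabs_triang_inv (f (cl01 x')) (f (cl01 x))). lra.
Qed.

Lemma cl01_zero x : cl01 x = 0 -> x <= 0.
Proof. unfold cl01, Rmax, Rmin; repeat destruct Rle_dec; lra. Qed.
Lemma cl01_one x : cl01 x = 1 -> 1 <= x.
Proof. unfold cl01, Rmax, Rmin; repeat destruct Rle_dec; lra. Qed.
Lemma cl01_lt1 x : x < 1 -> cl01 x < 1.
Proof. unfold cl01, Rmax, Rmin; repeat destruct Rle_dec; lra. Qed.
Lemma cl01_gt0 x : 0 < x -> 0 < cl01 x.
Proof. unfold cl01, Rmax, Rmin; repeat destruct Rle_dec; lra. Qed.

Lemma ub_zero_case y : I01 y -> ub y = 0 -> bc = DBC /\ y = 0.
Proof.
  intros Hy Hz. assert (E : bc = PBC \/ bc = DBC) by (destruct bc; auto).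
  destruct E as [E|E].
  - destruct (ub_pos_all y Hy E); lra.
  - split; auto. destruct (ub_pos y Hy) as [H _]. unfold I01 in Hy.
    destruct (Req_dec y 0); auto. assert (0 < ub y) by (apply H; lra). lra.
Qed.

Lemma vb_zero_case y : I01 y -> vb y = 0 -> bc = DBC /\ y = 1.
Proof.
  intros Hy Hz. assert (E : bc = PBC \/ bc = DBC) by (destruct bc; auto).
  destruct E as [E|E].
  - destruct (ub_pos_all y Hy E); lra.
  - split; auto. destruct (ub_pos y Hy) as [_ H]. unfold I01 in Hy.
    destruct (Req_dec y 1); auto. assert (0 < vb y) by (apply H; lra). lra.
Qed.

Lemma A_cont k a b : cont2 T k -> (bc = DBC -> forall s, 0 < s < T -> k 0 s = 0) ->
  0 < a -> a <= b -> b < T -> forall s x, continuity_2d_pt (hat2 a b (Aof k)) s x.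
Proof.
  intros Hk Hk0 Ha Hab Hb s x.
  assert (Hs : forall s, 0 < clab a b s < T) by (intros s'; pose proof (clab_in a b s' Hab); lra).
  destruct (Req_dec (ub (cl01 x)) 0) as [Hz|Hnz].
  - destruct (ub_zero_case _ (cl01_I01 x) Hz) as [E Hx0].
    destruct (dbc_bounds E) as [B HB].
    destruct (local_bound vb rc_vb x) as [d [Hd Hvd]].
    apply continuity_2d_pt_ext with
      (fun s' x' => (vb (cl01 x') * uh (cl01 x') (clab a b s')) * hat2 a b k s' x').
    { intros; unfold hat2, Aof; reflexivity. }
    apply c2_zero_bounded.
    + apply (cont2_hat T); auto.
    + unfold hat2. rewrite Hx0. apply Hk0; auto.
    + exists ((Rabs (vb (cl01 x)) + 1) * B).
      assert (Hp : 0 < Rmin d (1/2)) by (apply Rmin_pos; lra).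
      exists (mkposreal _ Hp). intros s' x' H1 H2; simpl in *.
      pose proof (Rmin_l d (1/2)); pose proof (Rmin_r d (1/2)).
      rewrite Rabs_mult. apply Rmult_le_compat; try apply Rabs_pos.
      * apply Hvd; lra.
      * apply HB. { split; [apply cl01_I01|apply Hs]. }
        apply cl01_lt1. apply cl01_zero in Hx0. apply Rabs_def2 in H2. lra.
  - apply continuity_2d_pt_ext with (fun s' x' => vb (cl01 x') *
       ((hat2 a b u s' x' - ub (cl01 x')) * / ub (cl01 x')) * hat2 a b k s' x').
    { intros; reflexivity. }
    apply continuity_2d_pt_mult; [apply continuity_2d_pt_mult|].
    + apply rc_hat, rc_vb.
    + apply continuity_2d_pt_mult.
      * apply continuity_2d_pt_minus; [apply (cont2_hat T); auto|apply rc_hat, rc_ub].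
      * apply continuity_2d_pt_inv; [apply rc_hat, rc_ub|auto].
    + apply (cont2_hat T); auto.
Qed.

Lemma B_cont k a b : cont2 T k -> (bc = DBC -> forall s, 0 < s < T -> k 1 s = 0) ->
  0 < a -> a <= b -> b < T -> forall s x, continuity_2d_pt (hat2 a b (Bof k)) s x.
Proof.
  intros Hk Hk0 Ha Hab Hb s x.
  assert (Hs : forall s, 0 < clab a b s < T) by (intros s'; pose proof (clab_in a b s' Hab); lra).
  destruct (Req_dec (vb (cl01 x)) 0) as [Hz|Hnz].
  - destruct (vb_zero_case _ (cl01_I01 x) Hz) as [E Hx0].
    destruct (dbc_bounds E) as [B HB].
    destruct (local_bound ub rc_ub x) as [d [Hd Hvd]].
    apply continuity_2d_pt_ext with
      (fun s' x' => (ub (cl01 x') * vh (cl01 x') (clab a b s')) * hat2 a b k s' x').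
    { intros; unfold hat2, Bof; reflexivity. }
    apply c2_zero_bounded.
    + apply (cont2_hat T); auto.
    + unfold hat2. rewrite Hx0. apply Hk0; auto.
    + exists ((Rabs (ub (cl01 x)) + 1) * B).
      assert (Hp : 0 < Rmin d (1/2)) by (apply Rmin_pos; lra).
      exists (mkposreal _ Hp). intros s' x' H1 H2; simpl in *.
      pose proof (Rmin_l d (1/2)); pose proof (Rmin_r d (1/2)).
      rewrite Rabs_mult. apply Rmult_le_compat; try apply Rabs_pos.
      * apply Hvd; lra.
      * apply HB. { split; [apply cl01_I01|apply Hs]. }
        apply cl01_gt0. apply cl01_one in Hx0. apply Rabs_def2 in H2. lra.
  - apply continuity_2d_pt_ext with (fun s' x' => ub (cl01 x') *
       ((hat2 a b v s' x' - vb (cl01 x')) * / vb (cl01 x')) * hat2 a b k s' x').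
    { intros; reflexivity. }
    apply continuity_2d_pt_mult; [apply continuity_2d_pt_mult|].
    + apply rc_hat, rc_ub.
    + apply continuity_2d_pt_mult.
      * apply continuity_2d_pt_minus; [apply (cont2_hat T); auto|apply rc_hat, rc_vb].
      * apply continuity_2d_pt_inv; [apply rc_hat, rc_vb|auto].
    + apply (cont2_hat T); auto.
Qed.

Lemma loc_int p q x : p < x < q -> locally x (fun y => p < y < q).
Proof.
  intros Hx. apply (locally_interval _ x (Finite p) (Finite q)); simpl; try lra.
  intros; lra.
Qed.

Lemma deriv_zero_const (f : R -> R) s l : 0 < s < T -> derivable_pt_lim f s l ->
  (forall s', 0 < s' < T -> f s' = 0) -> l = 0.
Proof.
  intros Hs Hd Hz. apply is_derive_Reals in Hd.
  assert (H : is_derive (fun _ : R => 0) s l).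
  { apply is_derive_ext_loc with f; auto.
    generalize (loc_int 0 T s Hs). apply filter_imp. intros y Hy. rewrite Hz; auto. }
  apply is_derive_unique in H. rewrite <- H.
  apply is_derive_unique. apply (is_derive_const (K:=R_AbsRing) (V:=R_NormedModule)).
Qed.

Lemma ut0 : bc = DBC -> forall s, 0 < s < T -> ut 0 s = 0.
Proof.
  intros E s Hs. pose proof Hbc as HB; rewrite E in HB; simpl in HB.
  destruct HB as [_ [_ [_ [Hz _]]]].
  apply (deriv_zero_const (fun s => u 0 s) s); auto.
  - apply Hut. split; [apply I01_0|auto].
  - intros; apply Hz; auto.
Qed.

Lemma vt1 : bc = DBC -> forall s, 0 < s < T -> vt 1 s = 0.
Proof.
  intros E s Hs. pose proof Hbc as HB; rewrite E in HB; simpl in HB.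
  destruct HB as [_ [_ [_ [Hz _]]]].
  apply (deriv_zero_const (fun s => v 1 s) s); auto.
  - apply Hvt. split; [apply I01_1|auto].
  - intros; apply Hz; auto.
Qed.

Lemma cont2_minus f g : cont2 T f -> cont2 T g -> cont2 T (fun x s => f x s - g x s).
Proof.
  intros Hf Hg x t HD eps He.
  destruct (Hf x t HD (eps/2)) as [d1 [Hd1 H1]]; [lra|].
  destruct (Hg x t HD (eps/2)) as [d2 [Hd2 H2]]; [lra|].
  exists (Rmin d1 d2); split; [apply Rmin_pos; auto|].
  intros y s HD' Hy Hs.
  pose proof (Rmin_l d1 d2); pose proof (Rmin_r d1 d2).
  assert (A1 := H1 y s HD' ltac:(lra) ltac:(lra)).
  assert (A2 := H2 y s HD' ltac:(lra) ltac:(lra)).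
  replace (f y s - g y s - (f x t - g x t)) with ((f y s - f x t) - (g y s - g x t)) by ring.
  eapply Rle_lt_trans; [apply Rabs_triang|]. rewrite Rabs_Ropp. lra.
Qed.

Lemma cont2_x f : (forall x, I01 x -> rc f x) -> cont2 T (fun x _ => f x).
Proof.
  intros Hf x t [Hx _] eps He. destruct (Hf x Hx eps He) as [d [Hd H]].
  exists d; split; auto. intros y s [Hy _] Hyx _.
  destruct (Req_dec y x) as [->|]. { rewrite Rminus_diag, Rabs_R0; lra. }
  apply (H y). split; auto.
Qed.

Definition du x s := u x s - ub x.
Definition dv x s := v x s - vb x.

Lemma cont2_du : cont2 T du.
Proof. apply cont2_minus; auto. apply cont2_x, rc_ub. Qed.
Lemma cont2_dv : cont2 T dv.
Proof. apply cont2_minus; auto. apply cont2_x, rc_vb. Qed.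

Lemma du0 : bc = DBC -> forall s, 0 < s < T -> du 0 s = 0.
Proof.
  intros E s Hs. pose proof Hbc as HB; rewrite E in HB; simpl in HB.
  destruct HB as [Hu0 [_ [_ [Hz _]]]]. unfold du. rewrite Hu0, (proj1 (Hz s Hs)). ring.
Qed.
Lemma dv1 : bc = DBC -> forall s, 0 < s < T -> dv 1 s = 0.
Proof.
  intros E s Hs. pose proof Hbc as HB; rewrite E in HB; simpl in HB.
  destruct HB as [_ [Hv1 [_ [Hz _]]]]. unfold dv. rewrite Hv1, (proj2 (Hz s Hs)). ring.
Qed.

Lemma is_derive_eqv (f : R -> R) x l l' : is_derive f x l -> l = l' -> is_derive f x l'.
Proof. intros H <-; auto. Qed.

Lemma D_mult (f g : R -> R) x df dg : is_derive f x df -> is_derive g x dg ->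
  is_derive (fun y => f y * g y) x (df * g x + f x * dg).
Proof. intros H1 H2; apply is_derive_Reals; apply (derivable_pt_lim_mult f g); apply is_derive_Reals; auto. Qed.
Lemma D_plus (f g : R -> R) x df dg : is_derive f x df -> is_derive g x dg ->
  is_derive (fun y => f y + g y) x (df + dg).
Proof. intros H1 H2; apply is_derive_Reals; apply (derivable_pt_lim_plus f g); apply is_derive_Reals; auto. Qed.
Lemma D_minus (f g : R -> R) x df dg : is_derive f x df -> is_derive g x dg ->
  is_derive (fun y => f y - g y) x (df - dg).
Proof. intros H1 H2; apply is_derive_Reals; apply (derivable_pt_lim_minus f g); apply is_derive_Reals; auto. Qed.
Lemma D_scal (f : R -> R) x k df : is_derive f x df -> is_derive (fun y => k * f y) x (k * df).
Proof. intros H1; apply is_derive_Reals; apply (derivable_pt_lim_scal f); apply is_derive_Reals; auto. Qed.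
Lemma D_inv (f : R -> R) x df : is_derive f x df -> f x <> 0 ->
  is_derive (fun y => / f y) x (- df / (f x)^2).
Proof. intros H1 H2. apply (is_derive_inv f x df H1 H2). Qed.

Definition Pf x s := Hdens (c x) (ub x) (vb x) (u x s) (v x s).
Definition Ptf x s := 2 * c x * (Aof ut x s + Bof vt x s).
Definition Gf x s := c x ^ 2 * (Aof du x s - Bof dv x s) / 2.

Lemma Pf_eq x s : Pf x s = c x * (Aof du x s + Bof dv x s).
Proof. unfold Pf, Hdens, Aof, Bof, uh, vh, du, dv, Rdiv. ring. Qed.

Lemma Pf_deriv x s : Dom T x s -> is_derive (fun s' => Pf x s') s (Ptf x s).
Proof.
  intros HD.
  assert (E : forall s', c x * (vb x / ub x) * ((u x s' - ub x) * (u x s' - ub x))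
     + c x * (ub x / vb x) * ((v x s' - vb x) * (v x s' - vb x)) = Pf x s').
  { intros; unfold Pf, Hdens; ring. }
  apply (is_derive_ext _ _ _ _ E).
  assert (Hu := Hut x s HD). assert (Hv := Hvt x s HD).
  apply is_derive_Reals in Hu. apply is_derive_Reals in Hv.
  assert (Hu' : is_derive (fun s' => u x s' - ub x) s (ut x s)).
  { eapply is_derive_eqv. apply (is_derive_minus (fun s' => u x s') (fun _ => ub x)); [apply Hu|apply is_derive_const].
    unfold minus, plus, opp, zero; simpl. ring. }
  assert (Hv' : is_derive (fun s' => v x s' - vb x) s (vt x s)).
  { eapply is_derive_eqv. apply (is_derive_minus (fun s' => v x s') (fun _ => vb x)); [apply Hv|apply is_derive_const].
    unfold minus, plus, opp, zero; simpl. ring. }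
  assert (D1 := D_mult _ _ _ _ _ Hu' Hu').
  assert (D2 := D_mult _ _ _ _ _ Hv' Hv').
  apply D_scal with (k := c x * (vb x / ub x)) in D1.
  apply D_scal with (k := c x * (ub x / vb x)) in D2.
  eapply is_derive_eqv; [apply (D_plus _ _ _ _ _ D1 D2)|].
  match goal with |- ?a = ?b => change (@eq R a b) end; unfold Ptf, Aof, Bof, uh, vh; unfold Rdiv. ring.
Qed.

Lemma hatP_cont a b : 0 < a -> a <= b -> b < T -> forall s x, continuity_2d_pt (hat2 a b Pf) s x.
Proof.
  intros Ha Hab Hb s x.
  apply continuity_2d_pt_ext with (fun s x => c (cl01 x) * (hat2 a b (Aof du) s x + hat2 a b (Bof dv) s x)).
  { intros; unfold hat2; rewrite Pf_eq; reflexivity. }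
  apply continuity_2d_pt_mult; [apply rc_hat, rc_c|apply continuity_2d_pt_plus].
  - apply A_cont; auto. apply cont2_du. apply du0.
  - apply B_cont; auto. apply cont2_dv. apply dv1.
Qed.

Lemma hatPt_cont a b : 0 < a -> a <= b -> b < T -> forall s x, continuity_2d_pt (hat2 a b Ptf) s x.
Proof.
  intros Ha Hab Hb s x.
  apply continuity_2d_pt_ext with (fun s x => (2 * c (cl01 x)) * (hat2 a b (Aof ut) s x + hat2 a b (Bof vt) s x)).
  { intros; unfold hat2, Ptf; reflexivity. }
  apply continuity_2d_pt_mult; [apply continuity_2d_pt_mult|apply continuity_2d_pt_plus].
  - apply continuity_2d_pt_const.
  - apply rc_hat, rc_c.
  - apply A_cont; auto. apply ut0.
  - apply B_cont; auto. apply vt1.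
Qed.

Lemma hatG_cont a b : 0 < a -> a <= b -> b < T -> forall s x, continuity_2d_pt (hat2 a b Gf) s x.
Proof.
  intros Ha Hab Hb s x.
  apply continuity_2d_pt_ext with (fun s x => (c (cl01 x) * c (cl01 x)) *
     (hat2 a b (Aof du) s x - hat2 a b (Bof dv) s x) * (/ 2)).
  { intros; unfold hat2, Gf; unfold Rdiv; ring. }
  apply continuity_2d_pt_mult; [apply continuity_2d_pt_mult|apply continuity_2d_pt_const].
  - apply continuity_2d_pt_mult; apply rc_hat, rc_c.
  - apply continuity_2d_pt_minus.
    + apply A_cont; auto. apply cont2_du. apply du0.
    + apply B_cont; auto. apply cont2_dv. apply dv1.
Qed.

Section T0.
Variable t0 : R.
Hypothesis Ht0 : 0 < t0 < T.

Lemma cont2_rc f : cont2 T f -> forall x, I01 x -> rc (fun x => f x t0) x.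
Proof.
  intros Hf x Hx eps He. destruct (Hf x t0 (conj Hx Ht0) eps He) as [d [Hd H]].
  exists d; split; auto. intros y [Hy Hyd]. simpl in *; unfold R_dist in *.
  apply H; auto. split; auto. rewrite Rminus_diag, Rabs_R0; auto.
Qed.

Lemma Uh_ext : exists Uh, (forall x, I01 x -> rc Uh x) /\ forall x, 0 < x < 1 -> Uh x = uh x t0.
Proof.
  assert (E : bc = PBC \/ bc = DBC) by (destruct bc; auto). destruct E as [E|E].
  - exists (fun x => uh x t0). split; auto. intros x Hx. unfold uh.
    apply rc_div; [apply rc_minus; [apply cont2_rc; auto|apply rc_ub; auto]|apply rc_ub; auto|].
    destruct (ub_pos_all x Hx E); lra.
  - pose proof Hbc as HB; rewrite E in HB; simpl in HB.
    destruct HB as [Hu0 [Hv1 [_ [Hz _]]]].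
    destruct (dbc_facts E) as [m [Hm Hf]].
    set (uhat := gext (fun x => u x t0) 0 (ux 0 t0)).
    exists (fun x => (uhat x - ubh x) / ubh x). split.
    + intros x Hx. apply rc_div.
      * apply rc_minus.
        -- apply gext_rc; [apply I01_0|apply (proj1 (Hz t0 Ht0))|apply (Hux t0 Ht0 0 I01_0)|apply cont2_rc; auto|exact Hx].
        -- unfold ubh; apply gext_rc; [apply I01_0|exact Hu0|apply (Hdub 0 I01_0)|apply rc_ub|exact Hx].
      * unfold ubh; apply gext_rc; [apply I01_0|exact Hu0|apply (Hdub 0 I01_0)|apply rc_ub|exact Hx].
      * destruct (Hf x Hx); lra.
    + intros x Hx. unfold uhat, ubh, uh. rewrite !gext_eq by lra.
      assert (0 < ub x) by (apply (ub_pos x); unfold I01; lra).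
      field. split; lra.
Qed.

Lemma Vh_ext : exists Vh, (forall x, I01 x -> rc Vh x) /\ forall x, 0 < x < 1 -> Vh x = vh x t0.
Proof.
  assert (E : bc = PBC \/ bc = DBC) by (destruct bc; auto). destruct E as [E|E].
  - exists (fun x => vh x t0). split; auto. intros x Hx. unfold vh.
    apply rc_div; [apply rc_minus; [apply cont2_rc; auto|apply rc_vb; auto]|apply rc_vb; auto|].
    destruct (ub_pos_all x Hx E); lra.
  - pose proof Hbc as HB; rewrite E in HB; simpl in HB.
    destruct HB as [Hu0 [Hv1 [_ [Hz _]]]].
    destruct (dbc_facts E) as [m [Hm Hf]].
    set (vhat := gext (fun x => v x t0) 1 (vx 1 t0)).
    exists (fun x => (vhat x - vbh x) / vbh x). split.
    + intros x Hx. apply rc_div.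
      * apply rc_minus.
        -- apply gext_rc; [apply I01_1|apply (proj2 (Hz t0 Ht0))|apply (Hvx t0 Ht0 1 I01_1)|apply cont2_rc; auto|exact Hx].
        -- unfold vbh; apply gext_rc; [apply I01_1|exact Hv1|apply (Hdvb 1 I01_1)|apply rc_vb|exact Hx].
      * unfold vbh; apply gext_rc; [apply I01_1|exact Hv1|apply (Hdvb 1 I01_1)|apply rc_vb|exact Hx].
      * destruct (Hf x Hx); lra.
    + intros x Hx. unfold vhat, vbh, vh. rewrite !gext_eq by lra.
      assert (0 < vb x) by (apply (ub_pos x); unfold I01; lra).
      field. split; lra.
Qed.

Lemma ub_nonneg x : I01 x -> 0 <= ub x /\ 0 <= vb x.
Proof.
  intros Hx. assert (E : bc = PBC \/ bc = DBC) by (destruct bc; auto). destruct E as [E|E].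
  - destruct (ub_pos_all x Hx E); lra.
  - pose proof Hbc as HB; rewrite E in HB; simpl in HB. destruct HB as [Hu0 [Hv1 _]].
    destruct (ub_pos x Hx) as [H1 H2]. unfold I01 in Hx. split.
    + destruct (Req_dec x 0) as [->|]; [lra|]. left; apply H1; lra.
    + destruct (Req_dec x 1) as [->|]; [lra|]. left; apply H2; lra.
Qed.

Definition Qf x := c x * Jfun (u x t0) (v x t0) (ub x) (vb x) /
   ((1 + u x t0 + v x t0) * (1 + ub x + vb x)).
Definition Qt (Uh Vh : R -> R) x := c x * JJ (Uh x) (Vh x) (u x t0) (v x t0) (ub x) (vb x) /
   ((1 + u x t0 + v x t0) * (1 + ub x + vb x)).

Lemma denom_pos x : I01 x -> 0 < (1 + u x t0 + v x t0) * (1 + ub x + vb x).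
Proof.
  intros Hx. destruct (ub_nonneg x Hx). destruct (Hnonneg x t0 (conj Hx Ht0)).
  apply Rmult_lt_0_compat; lra.
Qed.

Ltac rcs := repeat (first [apply rc_div | apply rc_inv | apply rc_minus | apply rc_plus
   | apply rc_mult | apply rc_pow | apply rc_const]).

Lemma Qt_rc Uh Vh : (forall x, I01 x -> rc Uh x) -> (forall x, I01 x -> rc Vh x) ->
  forall x, I01 x -> rc (Qt Uh Vh) x.
Proof.
  intros HU HV x Hx. unfold Qt, JJ. rcs; auto using rc_c, rc_ub, rc_vb;
   try (apply cont2_rc; auto).
  pose proof (denom_pos x Hx). lra.
Qed.

Lemma Qt_eq Uh Vh : (forall x, 0 < x < 1 -> Uh x = uh x t0) -> (forall x, 0 < x < 1 -> Vh x = vh x t0) ->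
  forall x, 0 < x < 1 -> Qt Uh Vh x = Qf x.
Proof. intros HU HV x Hx. unfold Qt, Qf. rewrite HU, HV by auto. reflexivity. Qed.

Lemma G_deriv Uh Vh : (forall x, 0 < x < 1 -> Uh x = uh x t0) -> (forall x, 0 < x < 1 -> Vh x = vh x t0) ->
  forall x, 0 < x < 1 -> is_derive (fun y => Gf y t0) x (- (Ptf x t0 / 2 + alpha / 2 * Qt Uh Vh x)).
Proof.
  intros HU HV x Hx.
  assert (Hx1 : I01 x) by (unfold I01; lra).
  assert (Hc : c x > 0) by auto.
  destruct (ub_pos x Hx1) as [Hub Hvb]. specialize (Hub (proj1 Hx)). specialize (Hvb (proj2 Hx)).
  destruct (Hnonneg x t0 (conj Hx1 Ht0)) as [Hu Hv].
  destruct (Heq x t0 (conj Hx1 Ht0)) as [E1 E2].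
  assert (Dc := deriv_interior _ _ x Hdc Hx).
  assert (Dub := deriv_interior _ _ x Hdub Hx).
  assert (Dvb := deriv_interior _ _ x Hdvb Hx).
  assert (Dcub := deriv_interior _ _ x Hsu Hx).
  assert (Dcvb := deriv_interior _ _ x Hsv Hx).
  assert (Dcu := deriv_interior _ _ x (HFu t0 Ht0) Hx).
  assert (Dcv := deriv_interior _ _ x (HFv t0 Ht0) Hx).
  assert (U1 : dc x * ub x + c x * dub x = alpha * vb x / (1 + ub x + vb x) - ub x).
  { apply is_derive_unique in Dcub. rewrite <- Dcub. symmetry.
    apply is_derive_unique. apply (D_mult c ub); auto. }
  assert (U2 : dc x * vb x + c x * dvb x = - (alpha * ub x / (1 + ub x + vb x) - vb x)).
  { apply is_derive_unique in Dcvb. rewrite <- Dcvb. symmetry.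
    apply is_derive_unique. apply (D_mult c vb); auto. }
  assert (Ef : forall y, /2 * ((vb y * / ub y) * ((c y * u y t0 - c y * ub y) * (c y * u y t0 - c y * ub y))
      - (ub y * / vb y) * ((c y * v y t0 - c y * vb y) * (c y * v y t0 - c y * vb y))) = Gf y t0).
  { intros y; unfold Gf, Aof, Bof, uh, vh, du, dv, Rdiv. ring. }
  apply (is_derive_ext _ _ _ _ Ef).
  assert (DW := D_minus _ _ _ _ _ Dcu Dcub).
  assert (DZ := D_minus _ _ _ _ _ Dcv Dcvb).
  assert (Diu := D_inv _ _ _ Dub ltac:(lra)).
  assert (Div := D_inv _ _ _ Dvb ltac:(lra)).
  assert (D1 := D_mult _ _ _ _ _ Dvb Diu).
  assert (D1' := D_mult _ _ _ _ _ Dub Div).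
  assert (D2 := D_mult _ _ _ _ _ DW DW).
  assert (D2' := D_mult _ _ _ _ _ DZ DZ).
  assert (D3 := D_mult _ _ _ _ _ D1 D2).
  assert (D3' := D_mult _ _ _ _ _ D1' D2').
  assert (D4 := D_minus _ _ _ _ _ D3 D3').
  assert (D5 := D_scal _ _ (/2) _ D4).
  eapply is_derive_eqv; [exact D5|].
  match goal with |- ?a = ?b => change (@eq R a b) end.
  assert (Edub : dub x = (alpha * vb x / (1 + ub x + vb x) - ub x - dc x * ub x) / c x).
  { apply (Rmult_eq_reg_l (c x)); [|lra]. rewrite <- U1. field. lra. }
  assert (Edvb : dvb x = (- (alpha * ub x / (1 + ub x + vb x) - vb x) - dc x * vb x) / c x).
  { apply (Rmult_eq_reg_l (c x)); [|lra]. rewrite <- U2. field. lra. }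
  assert (Eut : ut x t0 = alpha * v x t0 / (1 + u x t0 + v x t0) - u x t0 - Fu x t0) by lra.
  assert (Evt : vt x t0 = alpha * u x t0 / (1 + u x t0 + v x t0) - v x t0 + Fv x t0) by lra.
  unfold Qt, Ptf, Aof, Bof, JJ. rewrite HU, HV by auto. unfold uh, vh.
  rewrite Edub, Edvb, Eut, Evt.
  field. repeat split; lra.
Qed.

Lemma G01 : Gf 0 t0 = Gf 1 t0.
Proof.
  assert (E : bc = PBC \/ bc = DBC) by (destruct bc; auto). destruct E as [E|E].
  - pose proof Hbc as HB; rewrite E in HB; simpl in HB.
    destruct HB as [Hc01 [Hu01 [Hv01 [_ Hz]]]]. destruct (Hz t0 Ht0) as [Hz1 Hz2].
    unfold Gf, Aof, Bof, uh, vh, du, dv. rewrite Hc01, Hu01, Hv01, Hz1, Hz2. reflexivity.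
  - pose proof Hbc as HB; rewrite E in HB; simpl in HB.
    destruct HB as [Hu0 [Hv1 [_ [Hz _]]]]. destruct (Hz t0 Ht0) as [Hz1 Hz2].
    unfold Gf, Aof, Bof, uh, vh, du, dv. rewrite Hu0, Hv1, Hz1, Hz2, !Rdiv_0_r. unfold Rdiv; rewrite !Rmult_0_r, !Rmult_0_l; ring.
Qed.

Lemma flux Uh Vh : (forall x, I01 x -> rc Uh x) -> (forall x, I01 x -> rc Vh x) ->
  (forall x, 0 < x < 1 -> Uh x = uh x t0) -> (forall x, 0 < x < 1 -> Vh x = vh x t0) ->
  RInt (fun x => Ptf x t0) 0 1 = - alpha * RInt Qf 0 1 /\ ex_RInt Qf 0 1.
Proof.
  intros HUr HVr HU HV.
  set (gt := fun x => Ptf x t0 / 2 + alpha / 2 * Qt Uh Vh x).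
  assert (Hrp : forall y, I01 y -> rc (fun x => Ptf x t0) y).
  { intros y Hy. apply cpt_rc; auto.
    apply continuity_pt_ext with (fun x => hat2 t0 t0 Ptf t0 x).
    { intros; unfold hat2; rewrite clab_id by lra; reflexivity. }
    apply c2_restrict, hatPt_cont; lra. }
  assert (HrG : forall y, I01 y -> rc (fun x => Gf x t0) y).
  { intros y Hy. apply cpt_rc; auto.
    apply continuity_pt_ext with (fun x => hat2 t0 t0 Gf t0 x).
    { intros; unfold hat2; rewrite clab_id by lra; reflexivity. }
    apply c2_restrict, hatG_cont; lra. }
  assert (HrQ := Qt_rc Uh Vh HUr HVr).
  assert (Hrg : forall y, I01 y -> rc gt y).
  { intros y Hy. unfold gt. apply rc_plus.
    - apply rc_div; [auto|apply rc_const|intro; lra].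
    - apply rc_mult; auto. apply rc_const. }
  set (gtc := fun x => gt (cl01 x)).
  assert (Hc : forall x, continuity_pt gtc x) by (apply rc_clamp; auto).
  assert (Hcont : forall x, continuous gtc x) by (intros; apply continuity_pt_filterlim; auto).
  assert (Hex : forall a b, ex_RInt gtc a b) by (intros; apply (ex_RInt_continuous (V:=R_CompleteNormedModule)); auto).
  assert (DRI : forall x, is_derive (fun y => RInt gtc 0 y) x (gtc x)).
  { intros x. apply (is_derive_RInt gtc (fun y => RInt gtc 0 y) 0 x); auto. apply filter_forall. intros; apply (RInt_correct (V:=R_CompleteNormedModule)); auto. }
  set (Phi := fun y => RInt gtc 0 y + Gf (cl01 y) t0).
  destruct (MVT_gen Phi 0 1 (fun _ => 0)) as [z [_ Hz]].
  { rewrite Rmin_left, Rmax_right by lra. intros x Hx.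
    eapply is_derive_eqv.
    - apply D_plus; [apply DRI|].
      apply is_derive_ext_loc with (fun y => Gf y t0).
      + generalize (loc_int 0 1 x Hx). apply filter_imp. intros y Hy.
        rewrite cl01_id; auto. unfold I01; lra.
      + apply (G_deriv Uh Vh HU HV x Hx).
    - unfold gtc, gt. rewrite cl01_id by (unfold I01; lra). match goal with |- ?a = ?b => change (@eq R a b) end; ring. }
  { rewrite Rmin_left, Rmax_right by lra. intros x Hx.
    apply (continuity_pt_plus (fun y => RInt gtc 0 y) (fun y => Gf (cl01 y) t0)).
    - apply continuity_pt_filterlim. apply (ex_derive_continuous (K:=R_AbsRing) (V:=R_NormedModule) (fun y => RInt gtc 0 y)). eexists; apply DRI.
    - apply (rc_clamp (fun y => Gf y t0)); auto. }
  assert (HI : RInt gtc 0 1 = 0).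
  { unfold Phi in Hz. rewrite RInt_point in Hz. rewrite !cl01_id in Hz by (unfold I01; lra).
    rewrite <- G01 in Hz. change (zero : R) with 0 in Hz. lra. }
  set (Qtc := fun x => Qt Uh Vh (cl01 x)).
  assert (HexQ : ex_RInt Qtc 0 1).
  { apply (ex_RInt_continuous (V:=R_CompleteNormedModule)). intros; apply continuity_pt_filterlim. apply rc_clamp; auto. }
  assert (EQ : RInt Qtc 0 1 = RInt Qf 0 1).
  { apply RInt_ext. rewrite Rmin_left, Rmax_right by lra. intros x Hx.
    unfold Qtc. rewrite cl01_id by (unfold I01; lra). apply Qt_eq; auto. }
  split.
  - rewrite <- EQ.
    assert (E2 : RInt (fun x => Ptf x t0) 0 1 = 2 * RInt gtc 0 1 - alpha * RInt Qtc 0 1).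
    2:{ rewrite E2, HI. match goal with |- ?a = ?b => change (@eq R a b) end. ring. }
    rewrite <- RInt_lin; auto.
    apply RInt_ext. rewrite Rmin_left, Rmax_right by lra. intros x Hx.
    unfold gtc, Qtc, gt. rewrite cl01_id by (unfold I01; lra). match goal with |- ?a = ?b => change (@eq R a b) end. field.
  - apply ex_RInt_ext with Qtc; auto. rewrite Rmin_left, Rmax_right by lra. intros x Hx.
    unfold Qtc. rewrite cl01_id by (unfold I01; lra). apply Qt_eq; auto.
Qed.

End T0.
Definition Hfun s := / 2 * RInt (fun x => Pf x s) 0 1.

Lemma P_ex t a b : 0 < a -> a <= t <= b -> b < T -> ex_RInt (fun x => Pf (cl01 x) t) 0 1.
Proof.
  intros Ha Ht Hb. apply (ex_RInt_continuous (V:=R_CompleteNormedModule)).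
  intros z _. apply continuity_pt_filterlim.
  apply continuity_pt_ext with (fun x => hat2 a b Pf t x).
  { intros; unfold hat2; rewrite clab_id by lra; reflexivity. }
  apply c2_restrict, hatP_cont; lra.
Qed.

Lemma P_ex' t : 0 < t < T -> ex_RInt (fun x => Pf x t) 0 1.
Proof.
  intros Ht. apply ex_RInt_ext with (fun x => Pf (cl01 x) t).
  { rewrite Rmin_left, Rmax_right by lra. intros x Hx. rewrite cl01_id; auto. unfold I01; lra. }
  apply (P_ex t t t); lra.
Qed.

Lemma H_deriv t0 : 0 < t0 < T -> is_derive Hfun t0 (/ 2 * RInt (fun x => Ptf x t0) 0 1).
Proof.
  intros Ht0.
  set (a := t0 / 2). set (b := (t0 + T) / 2).
  assert (Ha : 0 < a < t0) by (unfold a; lra). assert (Hb : t0 < b < T) by (unfold b; lra).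
  set (f := fun s x => Pf (cl01 x) s).
  assert (Hext : forall s, / 2 * RInt (fun x => f s x) 0 1 = Hfun s).
  { intros s. unfold Hfun. f_equal. apply RInt_ext. rewrite Rmin_left, Rmax_right by lra.
    intros x Hx. unfold f. rewrite cl01_id; auto. unfold I01; lra. }
  apply (is_derive_ext _ _ _ _ Hext).
  assert (HD : forall s x, 0 < s < T -> Derive (fun z => f z x) s = Ptf (cl01 x) s).
  { intros s x Hs. apply is_derive_unique. unfold f. apply Pf_deriv. split; auto. apply cl01_I01. }
  assert (Main : is_derive (fun s => RInt (fun x => f s x) 0 1) t0
            (RInt (fun x => Derive (fun u => f u x) t0) 0 1)).
  { apply (is_derive_RInt_param f 0 1 t0).
    - generalize (loc_int 0 T t0 Ht0). apply filter_imp. intros s Hs x _.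
      eexists. unfold f. apply Pf_deriv. split; auto. apply cl01_I01.
    - intros x _. apply continuity_2d_pt_ext_loc with (hat2 a b Ptf).
      + assert (Hp : 0 < Rmin (t0 - a) (b - t0)) by (apply Rmin_pos; lra).
        exists (mkposreal _ Hp). intros s x' H1 H2; simpl in *.
        pose proof (Rmin_l (t0 - a) (b - t0)); pose proof (Rmin_r (t0 - a) (b - t0)).
        apply Rabs_def2 in H1.
        rewrite HD by lra. unfold hat2. rewrite clab_id by lra. reflexivity.
      + apply hatPt_cont; lra.
    - generalize (loc_int a b t0 (conj (proj2 Ha) (proj1 Hb))). apply filter_imp.
      intros s Hs. apply (P_ex s a b); lra. }
  eapply is_derive_eqv.
  - apply (D_scal (fun s => RInt (fun x => f s x) 0 1)). exact Main.
  - f_equal. apply RInt_ext. rewrite Rmin_left, Rmax_right by lra. intros x Hx.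
    rewrite HD by auto. rewrite cl01_id; auto. unfold I01; lra.
Qed.

Lemma main_sec : exists H : R -> R,
    forall t, 0 < t < T ->
      (exists I, Defs.is_RInt (fun x => Hdens (c x) (ub x) (vb x) (u x t) (v x t)) 0 1 I
                 /\ H t = / 2 * I) /\
      (exists I', Defs.is_RInt (fun x => c x * Jfun (u x t) (v x t) (ub x) (vb x)
                             / ((1 + u x t + v x t) * (1 + ub x + vb x))) 0 1 I'
                 /\ derivable_pt_lim H t (- (alpha / 2) * I')).
Proof.
  exists Hfun. intros t Ht. split.
  - exists (RInt (fun x => Pf x t) 0 1). split; [|reflexivity].
    exists (ex_RInt_Reals_0 _ _ _ (P_ex' t Ht)). rewrite <- RInt_Reals. reflexivity.
  - destruct (Uh_ext t Ht) as [Uh [HUr HU]]. destruct (Vh_ext t Ht) as [Vh [HVr HV]].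
    destruct (flux t Ht Uh Vh HUr HVr HU HV) as [HF HQ].
    exists (RInt (Qf t) 0 1). split.
    + exists (ex_RInt_Reals_0 _ _ _ HQ). rewrite <- RInt_Reals. reflexivity.
    + apply is_derive_Reals. eapply is_derive_eqv; [apply H_deriv; auto|].
      rewrite HF. match goal with |- ?a = ?b => change (@eq R a b) end. field.
Qed.

End Main.
End Aux.

Lemma cont2_transfer T f g : cont2 T f -> (forall x t, Dom T x t -> f x t = g x t) -> cont2 T g.
Proof.
  intros Hf E x t HD eps He. destruct (Hf x t HD eps He) as [d [Hd H]].
  exists d; split; auto. intros y s HD' H1 H2. rewrite <- !E by auto. auto.
Qed.

Theorem mainTheorem10
  (bc : BC) (alpha T : R) (c ub vb : R -> R) (u v : R -> R -> R)
  (Halpha : alpha > 0) (HT : T > 0)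
  (Hc : C1_01 c) (Hcpos : forall x, I01 x -> c x > 0)
  (Hstat : stationary alpha c ub vb)
  (Hsol : solution T alpha c u v)
  (Hnonneg : forall x t, Dom T x t -> 0 <= u x t /\ 0 <= v x t)
  (Hbc : bc_hyp bc T c ub vb u v) :
  exists H : R -> R,
    forall t, 0 < t < T ->
      (exists I, is_RInt (fun x => Hdens (c x) (ub x) (vb x) (u x t) (v x t)) 0 1 I
                 /\ H t = / 2 * I) /\
      (exists I', is_RInt (fun x => c x * Jfun (u x t) (v x t) (ub x) (vb x)
                             / ((1 + u x t + v x t) * (1 + ub x + vb x))) 0 1 I'
                 /\ derivable_pt_lim H t (- (alpha / 2) * I')).
Proof.
  destruct Hc as [dc [Hdc _]].
  destruct Hstat as [[dub [Hdub _]] [[dvb [Hdvb _]] [Hsu Hsv]]].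
  destruct Hsol as [Cu [Cv [ut [vt [Fu [Fv [Hut [Hvt [HFu [HFv Heq]]]]]]]]]].
  destruct Cu as [ux [uft [Hux [Huft [Hcu [_ Hcuft]]]]]].
  destruct Cv as [vx [vft [Hvx [Hvft [Hcv [_ Hcvft]]]]]].
  assert (Hcut : cont2 T ut).
  { apply cont2_transfer with uft; auto. intros x t HD.
    apply (uniqueness_limite (fun s => u x s) t); auto. }
  assert (Hcvt : cont2 T vt).
  { apply cont2_transfer with vft; auto. intros x t HD.
    apply (uniqueness_limite (fun s => v x s) t); auto. }
  eapply Aux.main_sec; eauto.
Qed.
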